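(* Let $n\ge1$, $k\ge1$, $A\in\{1,\dots,n\}^k$ and $B\subset\{1,\dots,n\}$ with $|B|=k+1$. Let $\tilde A=c^{1-\rho(A,B)}A$, $\tilde B=c^{1-\rho(A,B)}B$, let $I=(i_1\le\dots\le i_k)$ be the non-decreasing rearrangement of $\tilde A$, and $(j_1,\dots,j_k)=\Pi(I,\tilde B)$. Then $i_l<j_l$ for all $l$ and the chain of transpositions $((i_1\,j_1),\dots,(i_k\,j_k))$ belongs to $\Sigma^*_n(k)$.
   Context: $\mathfrak S_n$ is the symmetric group on $\{1,\dots,n\}$; products are composed right to left. $\mathsf T_n$ is the set of transpositions, always written $(i\,j)$ with $i<j$. For $\sigma\in\mathfrak S_n$, $|\sigma|=n-(\text{number of cycles of }\sigma\text{, fixed points counted})$; $\sigma_1\preccurlyeq\sigma_2$ iff $|\sigma_2|=|\sigma_1|+|\sigma_1^{-1}\sigma_2|$. $\Sigma_n(k)=\{(\tau_1,\dots,\tau_k)\in(\mathsf T_n)^k : |\tau_1\cdots\tau_k|=k,\ \tau_1\cdots\tau_k\preccurlyeq(1\,2\,\dots\,n)\}$, and $\Sigma^*_n(k)$ is the set of its elements $((i_1\,j_1),\dots,(i_k\,j_k))$ with $i_1\le\dots\le i_k$. Let $c=(1\,2\,\dots\,n)$ be the cyclic shift $x\mapsto x+1$ for $x<n$, $n\mapsto1$, acting componentwise on sequences and elementwise on sets; powers are taken modulo $n$. Parking process: given $E=(e_1,\dots,e_k)\in\{1,\dots,n\}^k$ and $O\subset\{1,\dots,n\}$ with $|O|=k+1$,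 define $p_k=c^{r}(e_k)$ where $r=\min\{s\in\{1,\dots,n\}: c^s(e_k)\in O\}$ and, backwards, $p_l=c^{r}(e_l)$ where $r=\min\{s\in\{1,\dots,n\}: c^s(e_l)\in O\setminus\{p_{l+1},\dots,p_k\}\}$. Write $\Pi(E,O)=(p_1,\dots,p_k)$; the unique element of $O\setminus\{p_1,\dots,p_k\}$ is the residue $\rho(E,O)$. *)

(* Defs.v *)
From mathcomp Require Import all_boot all_order all_fingroup.
Set Implicit Arguments. Unset Strict Implicit. Unset Printing Implicit Defensive.

(* Convention: points of {1,...,n} are natural numbers in [1,n]; as elements
   of 'I_n (on which permutations act) the point x is the ordinal x-1. *)

Definition transp (n i j : nat) : {perm 'I_n} :=
  match n return {perm 'I_n} with
  | 0 => 1%g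
  | m.+1 => tperm (inord i.-1 : 'I_m.+1) (inord j.-1)
  end.

(* The full cycle c = (1 2 ... n): x -> x+1 (x<n), n -> 1. *)
Definition fullcycle (n : nat) : {perm 'I_n} := perm (@ordS_inj n).

Definition plen (n : nat) (s : {perm 'I_n}) : nat := n - #|porbits s|.

(* s1 <= s2 iff |s2| = |s1| + |s1^{-1} s2| ; products composed right to left,
   so the function s1^{-1} o s2 is the mathcomp product (s2 * s1^-1)%g. *)
Definition pleq (n : nat) (s1 s2 : {perm 'I_n}) : bool :=
  plen s2 == plen s1 + plen (s2 * s1^-1)%g.

(* Right-to-left product tau_1 ... tau_k (tau_k applied first). *)
Definition prodT (n : nat) (ts : seq (nat * nat)) : {perm 'I_n} :=
  foldr (fun t acc => (acc * transp n t.1 t.2)%g) 1%g ts.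

Definition is_transp (n : nat) (t : nat * nat) : bool :=
  (1 <= t.1) && (t.1 < t.2) && (t.2 <= n).

Definition Sigma (n k : nat) (ts : seq (nat * nat)) : bool :=
  [&& size ts == k, all (is_transp n) ts,
      plen (prodT n ts) == k & pleq (prodT n ts) (fullcycle n)].

Definition SigmaStar (n k : nat) (ts : seq (nat * nat)) : bool :=
  Sigma n k ts && sorted leq (map fst ts).

Definition cshift (n s x : nat) : nat := (x.-1 + s) %% n + 1.

(* one parking step: r = min {s in 1..n | c^s e in O}, p = c^r e *)
Definition park1 (n e : nat) (O : seq nat) : nat :=
  cshift n (find (fun s => cshift n s.+1 e \in O) (iota 0 n)).+1 e.

Fixpoint parkr (n : nat) (es : seq nat) (O : seq nat) : seq nat :=
  match es with
  | [::] => [::]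
  | e :: es' => let p := park1 n e O in p :: parkr n es' (rem p O)
  end.

Definition Park (n : nat) (E O : seq nat) : seq nat := rev (parkr n (rev E) O).

Definition residue (n : nat) (E O : seq nat) : nat :=
  head 0 [seq x <- O | x \notin Park n E O].

Definition in_range (n x : nat) : bool := (1 <= x) && (x <= n).

(* Main.v *)
Require Import Defs.
From mathcomp Require Import all_boot all_order all_fingroup.
From mathcomp Require Import zify.
Set Implicit Arguments. Unset Strict Implicit. Unset Printing Implicit Defensive.

Definition sd (n e z : nat) : nat := if e < z then z - e - 1 else z + n - e - 1.

Lemma sd_gt n e z : e < z -> sd n e z = z - e - 1.
Proof. by rewrite /sd => ->. Qed.
Lemma sd_le n e z : z <= e -> sd n e z = z + n - e - 1.
Proof. by rewrite /sd ltnNge => ->. Qed.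

Lemma mod2 a n : n <= a < n + n -> a %% n = a - n.
Proof.
move=> /andP[h1 h2]; rewrite -{1}(subnK h1) modnDr modn_small //; lia.
Qed.

Lemma cshift_range n s x : 0 < n -> in_range n (cshift n s x).
Proof. move=> n0; rewrite /in_range /cshift; have := ltn_pmod (x.-1 + s) n0; lia. Qed.

Lemma cshiftC n a b x : cshift n a (cshift n b x) = cshift n (b + a) x.
Proof. by rewrite /cshift !addn1 /= modnDml addnA. Qed.

Lemma cshift_inj n s y z : in_range n y -> in_range n z ->
  cshift n s y = cshift n s z -> y = z.
Proof.
rewrite /in_range /cshift => /andP[y1 yn] /andP[z1 zn] /eqP; rewrite eqn_add2r.
rewrite eqn_modDr modn_small; last lia. rewrite modn_small; last lia.
move/eqP; lia.
Qed.

Lemma cshift_sd n e z : in_range n e -> in_range n z -> cshift n (sd n e z).+1 e = z.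
Proof.
rewrite /in_range /cshift => /andP[e1 en] /andP[z1 zn].
case: (ltnP e z) => h.
  rewrite sd_gt // modn_small; lia.
rewrite sd_le // mod2; lia.
Qed.

Lemma sd_cshift n e s : in_range n e -> s < n -> sd n e (cshift n s.+1 e) = s.
Proof.
rewrite /in_range /cshift => /andP[e1 en] sn.
case: (ltnP (e + s) n) => h.
  rewrite modn_small; last lia. rewrite sd_gt; lia.
rewrite mod2; last lia. rewrite sd_le; lia.
Qed.

Lemma sd_lt n e z : in_range n e -> in_range n z -> sd n e z < n.
Proof. rewrite /in_range /sd => /andP[e1 en] /andP[z1 zn]; case: ifP; lia. Qed.

Lemma sd_inj n e z z' : in_range n e -> in_range n z -> in_range n z' ->
  sd n e z = sd n e z' -> z = z'.
Proof. move=> he hz hz' h; by rewrite -(cshift_sd he hz) -(cshift_sd he hz') h. Qed.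

Lemma sd_rel n e x z : in_range n e -> in_range n x -> in_range n z ->
  sd n e x < sd n e z -> sd n x z = sd n e z - sd n e x - 1.
Proof.
rewrite /in_range /sd => /andP[e1 en] /andP[x1 xn] /andP[z1 zn].
do 3 case: ifP; lia.
Qed.

Lemma park1_min n e O z0 : 0 < n -> in_range n e -> z0 \in O -> in_range n z0 ->
  park1 n e O \in O /\ in_range n (park1 n e O) /\
  forall z, z \in O -> in_range n z -> sd n e (park1 n e O) <= sd n e z.
Proof.
move=> n0 he hz0 rz0.
set P := (fun s => cshift n s.+1 e \in O).
have hP z : z \in O -> in_range n z -> P (sd n e z).
  by move=> hz rz; rewrite /P cshift_sd.
have hasP : has P (iota 0 n).
  apply/hasP; exists (sd n e z0); last exact: hP.
  by rewrite mem_iota /= add0n sd_lt.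
have := hasP; rewrite has_find size_iota => hs.
have := nth_find 0 hasP; rewrite nth_iota // add0n => Ps.
rewrite /park1 -/P; split => //; split; first exact: cshift_range.
move=> z hz rz; rewrite sd_cshift //.
rewrite leqNgt; apply/negP => hlt.
have := before_find 0 hlt; rewrite nth_iota ?add0n ?hP //.
by apply: leq_trans hlt _; apply: ltnW.
Qed.

Lemma park1_eq n e O p : 0 < n -> in_range n e -> p \in O -> in_range n p ->
  (forall z, z \in O -> in_range n z -> sd n e p <= sd n e z) -> park1 n e O = p.
Proof.
move=> n0 he hp rp hmin.
have [hq [rq qmin]] := park1_min n0 he hp rp.
apply: (sd_inj he rq rp); apply/eqP; rewrite eqn_leq qmin // hmin //.
Qed.

Lemma park1_cong n e O O' : O =i O' -> park1 n e O = park1 n e O'.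
Proof.
move=> h; rewrite /park1; congr (cshift _ _.+1 _); apply: eq_find => s.
by rewrite h.
Qed.

Lemma mem_shift n s w O : in_range n w -> all (in_range n) O ->
  (cshift n s w \in map (cshift n s) O) = (w \in O).
Proof.
move=> rw rO; apply/mapP/idP => [[y yO e]|wO]; last by exists w.
by have := cshift_inj rw (allP rO y yO) e => ->.
Qed.

Lemma park1_shift n s e O : 0 < n -> all (in_range n) O ->
  park1 n (cshift n s e) (map (cshift n s) O) = cshift n s (park1 n e O).
Proof.
move=> n0 rO; rewrite /park1.
have E : (fun s' => cshift n s'.+1 (cshift n s e) \in map (cshift n s) O)
   =1 (fun s' => cshift n s'.+1 e \in O).
  move=> s' /=; rewrite cshiftC addnC -cshiftC mem_shift //.
  exact: cshift_range.
by rewrite (eq_find E) cshiftC addnC -cshiftC.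
Qed.

Lemma size_parkr n es O : size (parkr n es O) = size es.
Proof. by elim: es O => //= e es IH O; rewrite IH. Qed.

Lemma parkr_range n es O : 0 < n -> all (in_range n) (parkr n es O).
Proof. by move=> n0; elim: es O => //= e es IH O; rewrite IH cshift_range. Qed.

Lemma parkr_eqO n es O O' : uniq O -> uniq O' -> O =i O' ->
  parkr n es O = parkr n es O'.
Proof.
elim: es O O' => //= e es IH O O' uO uO' h.
rewrite (park1_cong n e h); congr (_ :: _); apply: IH; rewrite ?rem_uniq //.
by move=> z; rewrite !mem_rem_uniq // !inE h.
Qed.

Lemma rem_shift n s p O : in_range n p -> all (in_range n) O ->
  rem (cshift n s p) (map (cshift n s) O) = map (cshift n s) (rem p O).
Proof.
move=> rp; elim: O => //= y O IH /andP[ry rO].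
case: (y =P p) => [->|ne]; first by rewrite eqxx.
have -> : (cshift n s y == cshift n s p) = false.
  by apply/eqP => e; apply: ne; exact: cshift_inj ry rp e.
by rewrite IH.
Qed.

Lemma parkr_shift n s es O : 0 < n -> all (in_range n) O ->
  parkr n (map (cshift n s) es) (map (cshift n s) O) =
  map (cshift n s) (parkr n es O).
Proof.
move=> n0; elim: es O => //= e es IH O rO.
rewrite park1_shift // rem_shift ?cshift_range // IH //.
by apply/allP => z /mem_rem; apply: (allP rO).
Qed.

Lemma park1_next n e O x z0 : 0 < n -> in_range n e -> uniq O -> all (in_range n) O ->
  park1 n e O = x -> z0 \in O -> z0 != x ->
  park1 n e (rem x O) = park1 n x (rem x O).
Proof.
move=> n0 he uO rO hx hz0 nz0.
have [xO [rx xmin]] := park1_min n0 he hz0 (allP rO _ hz0).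
rewrite hx in xO rx xmin.
have hz0' : z0 \in rem x O by rewrite mem_rem_uniq // inE nz0.
have [wO [rw wmin]] := park1_min n0 rx hz0' (allP rO _ hz0).
set w := park1 n x (rem x O) in wO rw wmin *.
apply: park1_eq => // z hz rz.
have lt u : u \in rem x O -> in_range n u -> sd n e x < sd n e u.
  move=> hu ru; rewrite mem_rem_uniq // inE in hu; case/andP: hu => nu uO'.
  rewrite ltn_neqAle xmin // andbT; apply: contra nu => /eqP h.
  by apply/eqP; apply: (sd_inj he ru rx); rewrite h.
have := wmin z hz rz.
rewrite (sd_rel he rx rw (lt _ wO rw)) (sd_rel he rx rz (lt _ hz rz)).
have := lt _ wO rw; have := lt _ hz rz; lia.
Qed.

Lemma two_elems (O : seq nat) x : uniq O -> 1 < size O -> exists2 z, z \in O & z != x.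
Proof.
case: O => [|a [|b O]] //= /andP[]; rewrite inE negb_or => /andP[nab _] _ _.
case: (a =P x) => [ax|nax]; last by exists a; rewrite ?inE ?eqxx //; apply/eqP.
by exists b; rewrite ?inE ?eqxx ?orbT // -ax eq_sym.
Qed.

Lemma parkr_swap n a b es O : 0 < n -> in_range n a -> in_range n b ->
  uniq O -> all (in_range n) O -> 1 < size O ->
  perm_eq (parkr n (a :: b :: es) O) (parkr n (b :: a :: es) O).
Proof.
move=> n0 ra rb uO rO sO /=.
have [o oO] : exists o, o \in O by exists (nth 0 O 0); apply: mem_nth; lia.
have [xO [rx xmin]] := park1_min n0 ra oO (allP rO _ oO).
have [yO [ry ymin]] := park1_min n0 rb oO (allP rO _ oO).
set x := park1 n a O in xO rx xmin *.
set y := park1 n b O in yO ry ymin *.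
case: (x =P y) => [exy|nxy].
  have [z zO nzx] := two_elems x uO sO.
  rewrite (park1_next n0 rb uO rO (esym exy) zO nzx) -exy.
  rewrite (park1_next n0 ra uO rO (erefl x) zO nzx).
  by rewrite perm_refl.
have -> : park1 n b (rem x O) = y.
  apply: park1_eq => //; first by rewrite mem_rem_uniq // inE yO andbT eq_sym; apply/eqP.
  by move=> z /mem_rem zO rz; apply: ymin.
have -> : park1 n a (rem y O) = x.
  apply: park1_eq => //; first by rewrite mem_rem_uniq // inE xO andbT; apply/eqP.
  by move=> z /mem_rem zO rz; apply: xmin.
rewrite (@parkr_eqO n es (rem y (rem x O)) (rem x (rem y O))) ?rem_uniq //.
  by rewrite -[x :: _]cat1s -[y :: _]cat1s -[y :: _]cat1s -[x :: parkr _ _ _]cat1s perm_catCA.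
by move=> z; rewrite !mem_rem_uniq ?rem_uniq // !inE !mem_rem_uniq // !inE andbCA.
Qed.

Lemma park1_inO n e O : 0 < n -> in_range n e -> all (in_range n) O -> O != [::] ->
  park1 n e O \in O.
Proof.
move=> n0 he rO; case: O rO => // o O rO _.
by have [] := park1_min n0 he (mem_head o O) (allP rO _ (mem_head o O)).
Qed.

Lemma parkr_move n u a v O : 0 < n -> all (in_range n) u -> in_range n a ->
  uniq O -> all (in_range n) O -> size (u ++ a :: v) < size O ->
  perm_eq (parkr n (u ++ a :: v) O) (parkr n (a :: u ++ v) O).
Proof.
move=> n0; elim: u O => [|b u IH] O; first by rewrite perm_refl.
move=> /= /andP[rb ru] ra uO rO sO.
have pO : park1 n b O \in O by apply: park1_inO => //; apply/eqP => h; move: sO; rewrite h /=; lia.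
apply: (perm_trans (y := park1 n b O :: parkr n (a :: u ++ v) (rem (park1 n b O) O))).
  rewrite perm_cons IH ?rem_uniq //.
    by apply/allP => z /mem_rem; apply: (allP rO).
  rewrite size_rem //; move: sO; rewrite /= size_cat /=; lia.
have -> : park1 n b O :: parkr n (a :: u ++ v) (rem (park1 n b O) O)
  = parkr n (b :: a :: u ++ v) O by [].
apply: parkr_swap => //; move: sO; rewrite /= size_cat /=; lia.
Qed.

Lemma parkr_perm n es es' O : 0 < n -> all (in_range n) es ->
  uniq O -> all (in_range n) O -> size es < size O -> perm_eq es es' ->
  perm_eq (parkr n es O) (parkr n es' O).
Proof.
move=> n0; elim: es es' O => [|a es IH] es' O.
  by move=> _ _ _ _; case: es' => // x s /perm_size.
move=> /= /andP[ra res] uO rO sO hp.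
have hin : a \in es' by rewrite -(perm_mem hp) mem_head.
case/splitPr: hin hp => u v hp.
have hp' : perm_eq es (u ++ v).
  rewrite -(perm_cons a); apply: (perm_trans hp).
  apply/seq.permP => p /=; rewrite !count_cat /=; lia.
have rs : all (in_range n) (u ++ a :: v) by rewrite -(perm_all _ hp) /= ra res.
have pO : park1 n a O \in O by apply: park1_inO => //; apply/eqP => h; move: sO; rewrite h /=; lia.
apply: (perm_trans (y := parkr n (a :: u ++ v) O)); last first.
  rewrite perm_sym; apply: parkr_move => //.
  - by move: rs; rewrite all_cat => /andP[].
  - by rewrite -(perm_size hp).
rewrite /= perm_cons IH ?rem_uniq //.
  by apply/allP => z /mem_rem; apply: (allP rO).
rewrite size_rem //; move: sO => /=; lia.
Qed.

Lemma park1_lin n e O : 0 < n -> in_range n e -> all (in_range n) O -> 1 \in O ->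
  park1 n e O != 1 ->
  e < park1 n e O /\ forall z, z \in O -> ~~ (e < z < park1 n e O).
Proof.
move=> n0 he rO h1 hp.
have r1 : in_range n 1 by rewrite /in_range.
have [pO [rp pmin]] := park1_min n0 he h1 r1.
set p := park1 n e O in hp pO rp pmin *.
have he' := he; move: he' rp; rewrite /in_range => /andP[e1 en] /andP[p1 pn].
have s1 := pmin 1 h1 r1; rewrite (sd_le n (e:=e) (z:=1)) // in s1.
have ep : e < p.
  rewrite ltnNge; apply/negP => hpe; move: s1; rewrite (sd_le n hpe).
  move: hp => /eqP; lia.
split => // z zO; apply/negP => /andP[ez zp].
have := pmin z zO (allP rO _ zO); rewrite !sd_gt //; lia.
Qed.

Lemma parkr_lin n es O : 0 < n -> all (in_range n) es ->
  uniq O -> all (in_range n) O -> 1 \in O -> 1 \notin parkr n es O ->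
  all (fun q => (q.1 < q.2) && (q.2 \in O)) (zip es (parkr n es O)) &&
  pairwise (fun a b => ~~ (a.1 < b.2 <= a.2)) (zip es (parkr n es O)).
Proof.
move=> n0; elim: es O => [|e es IH] O //= /andP[re res] uO rO h1.
rewrite inE negb_or => /andP[hp1 hn1].
have hp1' : park1 n e O != 1 by rewrite eq_sym.
have [ep pfree] := park1_lin n0 re rO h1 hp1'.
set p := park1 n e O in hp1 hp1' hn1 ep pfree *.
have r1 : in_range n 1 by move: re; rewrite /in_range; lia.
have [pO _] := park1_min n0 re h1 r1; rewrite -/p in pO.
have h1' : 1 \in rem p O by rewrite mem_rem_uniq // inE hp1.
have rO' : all (in_range n) (rem p O) by apply/allP => z /mem_rem; apply: (allP rO).
have /andP[IH1 IH2] := IH (rem p O) res (rem_uniq _ uO) rO' h1' hn1.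
rewrite ep pO IH2 /= andbT; apply/andP; split.
  apply: sub_all IH1 => -[a b] /= /andP[-> /mem_rem ->]; done.
apply: sub_all IH1 => -[a b] /= /andP[_ hb].
move: hb; rewrite mem_rem_uniq // inE => /andP[hbp hbO].
have := pfree b hbO; move: hbp; rewrite /=. lia.
Qed.

Lemma transpE m i j : transp m.+1 i j = tperm (inord i.-1 : 'I_m.+1) (inord j.-1).
Proof. by []. Qed.

Lemma prodT_rcons n ts t : prodT n (rcons ts t) = (transp n t.1 t.2 * prodT n ts)%g.
Proof.
rewrite /prodT -cats1 foldr_cat /= mul1g.
move: (transp n t.1 t.2) => a.
elim: ts => [|u ts IH] /=; first by rewrite mulg1.
by rewrite IH mulgA.
Qed.

Lemma prodT_fix m ts (w : 'I_m.+1) :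
  (forall t, t \in ts -> transp m.+1 t.1 t.2 w = w) -> prodT m.+1 ts w = w.
Proof.
elim: ts => [|t ts IH] h /=; first by rewrite perm1.
have IH' : prodT m.+1 ts w = w by apply: IH => u hu; apply: h; rewrite inE hu orbT.
by rewrite permM IH' h ?mem_head.
Qed.

Lemma tperm_fix m i j (w : 'I_m.+1) : i.-1 <= m -> j.-1 <= m ->
  i.-1 != w -> j.-1 != w -> tperm (inord i.-1 : 'I_m.+1) (inord j.-1) w = w.
Proof.
move=> hi hj ni nj; apply: tpermD.
  by apply: contra ni => /eqP <-; rewrite inordK.
by apply: contra nj => /eqP <-; rewrite inordK.
Qed.

Lemma porbits1 m : #|porbits (1 : {perm 'I_m.+1})| = m.+1.
Proof.
have E : porbit (1 : {perm 'I_m.+1}) =1 (fun x => [set x]).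
  move=> x; apply/setP => y; rewrite inE; apply/porbitP/eqP => [[i ->]|->].
    by rewrite expg1n perm1.
  by exists 0; rewrite expg0 perm1.
rewrite /porbits (eq_imset _ E) card_imset ?card_ord //; exact: set1_inj.
Qed.

Lemma fullcycleE m (x : 'I_m.+1) : fullcycle m.+1 x = ordS x.
Proof. by rewrite /fullcycle permE. Qed.

Lemma cycle_iter m r : r <= m -> ((fullcycle m.+1) ^+ r)%g ord0 = inord r.
Proof.
elim: r => [|r IH] h.
  by rewrite expg0 perm1; apply: val_inj; rewrite /= inordK.
rewrite expgSr permM IH ?fullcycleE; last lia.
apply: val_inj; rewrite /= !inordK ?modn_small //; lia.
Qed.

Lemma porbits_c m : #|porbits (fullcycle m.+1)| = 1.
Proof.
have E x : porbit (fullcycle m.+1) x = porbit (fullcycle m.+1) ord0.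
  apply/eqP; rewrite eq_porbit_mem; apply/porbitP; exists x.
  rewrite cycle_iter; last by have := ltn_ord x; lia.
  by apply: val_inj; rewrite /= inordK.
have -> : porbits (fullcycle m.+1) = [set porbit (fullcycle m.+1) ord0].
  apply/setP => S; rewrite inE; apply/imsetP/eqP => [[x _ ->]|->] //.
  by exists ord0.
exact: cards1.
Qed.

Lemma cinv m w : 0 < w <= m -> ((fullcycle m.+1)^-1)%g (inord w) = inord w.-1.
Proof.
move=> hw.
have <- : fullcycle m.+1 (inord w.-1) = inord w.
  rewrite fullcycleE; apply: val_inj; rewrite /= !inordK ?modn_small; lia.
by rewrite permK.
Qed.

Lemma perm_main m ts : all (is_transp m.+1) ts ->
  pairwise (fun a b => a.1 <= b.1) ts ->
  pairwise (fun a b => ~~ (b.1 < a.2 <= b.2)) ts ->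
  #|porbits (prodT m.+1 ts)| + size ts = m.+1 /\
  #|porbits (prodT m.+1 ts * (fullcycle m.+1)^-1)%g| = (size ts).+1.
Proof.
elim/last_ind: ts => [|ts [i j] IH].
  by move=> _ _ _; rewrite /prodT /= mul1g porbitsV porbits1 porbits_c addn0.
rewrite all_rcons -!cats1 !pairwise_cat !allrel1r /= !andbT.
move=> /andP[hij hall] /andP[h1 hp1] /andP[h2 hp2].
have [IHa IHb] := IH hall hp1 hp2.
move: hij; rewrite /is_transp /= => /andP[/andP[i1 ij] jn].
rewrite cats1 prodT_rcons /= ?transpE size_rcons.
set P := prodT m.+1 ts in IHa IHb *.
set x : 'I_m.+1 := inord i.-1.
set y : 'I_m.+1 := inord j.-1.
have hfix (w : 'I_m.+1) : i <= w < j -> P w = w.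
  move=> /andP[iw wj]; apply: prodT_fix => -[i' j'] ht /=.
  have := allP hall _ ht; rewrite /is_transp /= => /andP[/andP[i1' ij'] jn'].
  have := allP h1 _ ht; have := allP h2 _ ht; rewrite /= => hj' hi'.
  rewrite ?transpE tperm_fix //; try lia.
have xy : x != y.
  apply/eqP => /(congr1 val); rewrite /= !inordK; lia.
split.
  have : #|porbits (tperm x y * P)| + (x \notin porbit P y).*2 = #|porbits P| + (x != y)
    := porbits_mul_tperm P x y.
  rewrite xy /=.
  have -> : x \notin porbit P y.
    apply/negP => /porbitP[r hr]; move: xy; rewrite hr permX_fix ?eqxx //.
    apply: hfix; rewrite /y inordK; lia.
  have -> : true.*2 = 2 by [].
  rewrite addn2 addn1 => -[h]. by rewrite addnS -addSn h IHa.
rewrite -mulgA.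
set Q := (P * (fullcycle m.+1)^-1)%g in IHb *.
have hQ r : r <= j - i -> (Q ^+ r)%g y = inord (j.-1 - r).
  elim: r => [|r IHr] hr; first by rewrite expg0 perm1 subn0.
  rewrite expgSr permM IHr; last lia.
  rewrite /Q permM hfix; last by rewrite inordK; lia.
  rewrite cinv; last lia.
  congr inord; lia.
have : #|porbits (tperm x y * Q)| + (x \notin porbit Q y).*2 = #|porbits Q| + (x != y)
  := porbits_mul_tperm Q x y.
rewrite xy /=.
have -> : x \notin porbit Q y = false.
  apply/negbF/porbitP; exists (j - i); rewrite hQ //.
  congr inord; lia.
have -> : false.*2 = 0 by [].
by rewrite addn0 => ->; rewrite IHb addn1.
Qed.

Lemma pairwise_rev T (r : rel T) s : pairwise r (rev s) = pairwise (fun x y => r y x) s.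
Proof.
elim: s => //= x s IH.
by rewrite rev_cons -cats1 pairwise_cat IH allrel1r /= andbT all_rev.
Qed.

Theorem lemma5p3 (n k : nat) (A B : seq nat) :
  1 <= n -> 1 <= k ->
  size A = k -> all (in_range n) A ->
  uniq B -> size B = k.+1 -> all (in_range n) B ->
  let rho := residue n A B in
  let At := map (cshift n (n + 1 - rho)) A in
  let Bt := map (cshift n (n + 1 - rho)) B in
  let I := sort leq At in
  let J := Park n I Bt in
  (forall l, l < k -> nth 0 I l < nth 0 J l) /\ SigmaStar n k (zip I J).
Proof.
move=> n1 k1 sA rA uB sB rB.
have [m Hm] : exists m, n = m.+1 by exists n.-1; lia.
subst n.
move=> rho At Bt I J.
have n0 : 0 < m.+1 by [].
have hkm : k <= m.
  have : size B <= size (iota 1 m.+1).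
    apply: uniq_leq_size => // x hx; rewrite mem_iota.
    by move: (allP rB x hx); rewrite /in_range; lia.
  rewrite size_iota sB; lia.
set PA := parkr m.+1 (rev A) B.
have sPA : size PA = k by rewrite size_parkr size_rev.
have [rhoB rhoP] : rho \in B /\ rho \notin PA.
  rewrite /rho /residue.
  have -> : Park m.+1 A B = rev PA by [].
  case E : [seq x <- B | x \notin rev PA] => [|y l].
    exfalso; have : size B <= size (rev PA).
      apply: uniq_leq_size => // x hx; apply/negPn/negP => hn.
      have : x \in [seq x <- B | x \notin rev PA] by rewrite mem_filter hn.
      by rewrite E.
    rewrite size_rev sPA sB; lia.
  have : y \in [seq x <- B | x \notin rev PA] by rewrite E mem_head.
  by rewrite mem_filter mem_rev => /andP[h1 h2]; split.
have rr := allP rB _ rhoB.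
have sh1 : cshift m.+1 (m.+1 + 1 - rho) rho = 1.
  rewrite /cshift; move: rr; rewrite /in_range => rr.
  have -> : rho.-1 + (m.+1 + 1 - rho) = m.+1 by lia.
  by rewrite modnn.
have rAt : all (in_range m.+1) At.
  by apply/allP => x /mapP[y _ ->]; exact: cshift_range.
have rBt : all (in_range m.+1) Bt.
  by apply/allP => x /mapP[y _ ->]; exact: cshift_range.
have uBt : uniq Bt.
  rewrite map_inj_in_uniq // => x y hx hy; apply: cshift_inj; exact: (allP rB).
have oneBt : 1 \in Bt by rewrite -[X in X \in _]sh1; apply: map_f.
have sBt : size Bt = k.+1 by rewrite size_map.
have pI : perm_eq I At by rewrite /I perm_sort.
have rI : all (in_range m.+1) I by rewrite (perm_all _ pI).
have sI : size I = k by rewrite size_sort size_map.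
set P := parkr m.+1 (rev I) Bt.
have sP : size P = k by rewrite size_parkr size_rev.
have notin1 : 1 \notin P.
  have hp : perm_eq P (parkr m.+1 (rev At) Bt).
    apply: parkr_perm => //; first by rewrite all_rev.
      by rewrite size_rev sI sBt.
    by rewrite perm_rev perm_sym perm_rev perm_sym.
  rewrite (perm_mem hp) /At /Bt -map_rev parkr_shift //.
  apply/negP => /mapP[x hx e].
  have rx : in_range m.+1 x := allP (parkr_range _ _ n0) x hx.
  have ex : x = rho by apply: (cshift_inj (s := m.+1 + 1 - rho) rx rr); rewrite sh1 -e.
  by move: rhoP; rewrite -ex hx.
have rrevI : all (in_range m.+1) (rev I) by rewrite all_rev.
have /andP[L1 L2] := @parkr_lin m.+1 (rev I) Bt n0 rrevI uBt rBt oneBt notin1.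
have ts_eq : zip I J = rev (zip (rev I) P).
  by rewrite rev_zip ?revK // size_rev sI sP.
have hall1 : all (fun q => (q.1 < q.2) && (q.2 \in Bt)) (zip I J).
  by rewrite ts_eq all_rev.
have hpw2 : pairwise (fun a b => ~~ (b.1 < a.2 <= b.2)) (zip I J).
  by rewrite ts_eq pairwise_rev.
have sJ : size J = k by rewrite /J /Park size_rev size_parkr size_rev.
have hfst : map fst (zip I J) = I by apply: unzip1_zip; rewrite sI sJ.
have hpw1 : pairwise (fun a b => a.1 <= b.1) (zip I J).
  have : pairwise leq I.
    by have := sort_sorted leq_total At; rewrite (sorted_pairwise leq_trans).
  by rewrite -{1}hfst pairwise_map.
have hallT : all (is_transp m.+1) (zip I J).
  apply/allP => -[a b] hab.
  have := allP hall1 _ hab; rewrite /= => /andP[ab bB].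
  have : a \in map fst (zip I J) by exact: (map_f fst hab).
  rewrite hfst => aI.
  move: (allP rI a aI) (allP rBt b bB); rewrite /in_range => /andP[a1 an] /andP[b1 bn].
  by rewrite /is_transp /= a1 ab bn.
have sts : size (zip I J) = k by rewrite size_zip sI sJ minnn.
have [PA1 PB1] := perm_main hallT hpw1 hpw2.
split.
  move=> l hl.
  have := (all_nthP (0, 0) hall1) l; rewrite sts nth_zip ?sI ?sJ //.
  by move=> /(_ hl) /andP[].
rewrite /SigmaStar /Sigma sts eqxx hallT hfst sort_sorted ?andbT /=; last exact: leq_total.
apply/andP; split.
  rewrite /plen; apply/eqP; move: PA1 hkm; rewrite sts; clear; lia.
rewrite /pleq /plen porbits_c -(porbitsV (fullcycle m.+1 * _)) invMg invgK PB1 sts.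
apply/eqP; move: PA1 hkm; rewrite sts; clear; lia.
Qed.
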